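(* An abelian group is almost divisible if and only if it is the direct sum of a divisible group and a bounded group. In particular, every almost divisible abelian group is algebraically compact.
   Context: For a prime $p$, the $p$-length $l_p(A)$ of an abelian group $A$ is the smallest ordinal $\lambda$ such that $p^\lambda A$ is $p$-divisible, where $p^0A=A$, $p^{\alpha+1}A=p(p^\alpha A)$ and $p^\alpha A=\bigcap_{\beta<\alpha}p^\beta A$ for limit $\alpha$. An abelian group $A$ is called almost divisible if $l_p(A)=0$ for all but finitely many primes $p$ and $l_p(A)<\omega$ for every prime $p$. A group is bounded if $mA=0$ for some integer $m\ge1$. *)

(* Defs.v *)
From HB Require Import structures.
From mathcomp Require Import all_boot all_order all_algebra.
From Stdlib Require List.
Set Implicit Arguments. Unset Strict Implicit. Unset Printing Implicit Defensive.
Import GRing.Theory.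
Local Open Scope ring_scope.

Definition p_divisible (A : zmodType) (p : nat) : Prop :=
  forall a : A, exists b : A, a = b *+ p.

(* p^n A (n finite) is p-divisible: every element of p^n A is p times an
   element of p^n A. *)
Definition pn_part_p_divisible (A : zmodType) (p n : nat) : Prop :=
  forall a : A, exists b : A, a *+ (p ^ n) = (b *+ (p ^ n)) *+ p.

(* l_p(A) < omega  <->  p^n A is p-divisible for some finite n. *)
Definition finite_p_length (A : zmodType) (p : nat) : Prop :=
  exists n : nat, pn_part_p_divisible A p n.

(* l_p(A) = 0  <->  A is p-divisible. *)
Definition almost_divisible (A : zmodType) : Prop :=
  (exists s : seq nat, forall p : nat, prime p -> ~ p_divisible A p -> p \in s)
  /\ (forall p : nat, prime p -> finite_p_length A p).

Definition divisible (A : zmodType) : Prop :=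
  forall (a : A) (n : nat), (0 < n)%N -> exists b : A, a = b *+ n.

Definition bounded (A : zmodType) : Prop :=
  exists m : nat, (1 <= m)%N /\ forall a : A, a *+ m = 0.

Definition subgroup (A : zmodType) (S : A -> Prop) : Prop :=
  S 0 /\ (forall x y, S x -> S y -> S (x - y)).

Definition divisible_plus_bounded (A : zmodType) : Prop :=
  exists (D B : A -> Prop),
    subgroup D /\ subgroup B /\
    (forall d (n : nat), D d -> (0 < n)%N -> exists e, D e /\ d = e *+ n) /\
    (exists m : nat, (1 <= m)%N /\ forall b, B b -> b *+ m = 0) /\
    (forall x, D x -> B x -> x = 0) /\
    (forall a : A, exists d b, D d /\ B b /\ a = d + b).

(* Algebraic compactness (Fuchs): every system of linear equations
     sum_j n_ij x_j = a_i   (i in I),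
   each equation involving finitely many unknowns x_j (j in J), which is
   finitely solvable in A, is solvable in A.  Row i is given as a finite
   list of (unknown, integer coefficient) pairs. *)
Definition eq_holds (A : zmodType) (J : Type)
    (row : seq (J * int)) (rhs : A) (x : J -> A) : Prop :=
  \sum_(c <- row) (x c.1 *~ c.2) = rhs.

Definition algebraically_compact (A : zmodType) : Prop :=
  forall (I J : Type) (rows : I -> seq (J * int)) (rhs : I -> A),
    (forall F : seq I, exists x : J -> A,
        forall i, List.In i F -> eq_holds (rows i) (rhs i) x) ->
    exists x : J -> A, forall i : I, eq_holds (rows i) (rhs i) x.

(* Main.v *)
Require Import Defs.
From mathcomp Require Import all_boot all_order all_algebra.
From mathcomp Require Import boolp classical_sets.
Set Implicit Arguments. Unset Strict Implicit. Unset Printing Implicit Defensive.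
Import GRing.Theory Num.Theory.
Local Open Scope ring_scope.

Section Basic.
Variable A : zmodType.
Implicit Types (S : A -> Prop) (x y : A).

Lemma subg_add S : subgroup S -> forall x y, S x -> S y -> S (x + y).
Proof.
move=> [S0 SB] x y Sx Sy.
have Sny : S (- y) by rewrite -sub0r; apply: SB.
by rewrite -[y]opprK; apply: SB.
Qed.

Lemma subg_opp S : subgroup S -> forall x, S x -> S (- x).
Proof. by move=> [S0 SB] x Sx; rewrite -sub0r; apply: SB. Qed.

Lemma subg_muln S : subgroup S -> forall x n, S x -> S (x *+ n).
Proof.
move=> sS x n Sx; elim: n => [|n IH]; first by rewrite mulr0n; case: sS.
by rewrite mulrS; apply: subg_add.
Qed.

Lemma subg_mulz S : subgroup S -> forall x k, S x -> S (x *~ k).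
Proof.
move=> sS x [n|n] Sx /=; first exact: subg_muln.
by rewrite NegzE mulrNz; apply: subg_opp => //; apply: subg_muln.
Qed.

Lemma Bez_nat (p m : nat) : coprime p m ->
  exists u v : int, u * p%:Z + v * m%:Z = 1.
Proof.
move=> cop; have [u [v E]] := Bezoutz p m.
exists u, v; rewrite E /gcdz /=.
by move: cop; rewrite /coprime => /eqP ->.
Qed.

End Basic.

Lemma key_b (A : zmodType) (b0 : A) (m p n m' : nat) (u v : int) :
  b0 *+ m = 0 -> m = (m' * p ^ n)%N -> u * p%:Z + v * m'%:Z = 1 ->
  b0 *+ p ^ n = b0 *~ u *+ p ^ n *+ p.
Proof.
move=> bm Em Euv.
rewrite -{1}(mulr1z b0) -Euv mulrzDr mulrnDl.
have -> : b0 *~ (v * m'%:Z) *+ p ^ n = 0.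
  rewrite mulrzA -pmulrn -mulrnA -Em pmulrn -mulrzA mulrC mulrzA -pmulrn bm.
  by rewrite mul0rz.
rewrite addr0 mulrzA -pmulrn -!mulrnA; congr (_ *+ _).
by rewrite mulnC.
Qed.

Lemma dpb_ad (A : zmodType) : divisible_plus_bounded A -> almost_divisible A.
Proof.
move=> [D [B [sD [sB [divD [[m [m1 bB]] [disj dec]]]]]]].
have key : forall p, prime p -> forall a : A,
    exists b, a *+ p ^ logn p m = b *+ p ^ logn p m *+ p.
  move=> p pp a.
  have [m' cop Em] := pfactor_coprime pp m1.
  have [u [v Euv]] := Bez_nat cop.
  have [d [b0 [Dd [Bb0 ->]]]] := dec a.
  have [e [De ->]] := divD d p Dd (prime_gt0 pp).
  exists (e + b0 *~ u).
  rewrite mulrnDl (key_b (bB _ Bb0) Em Euv) !mulrnDl; congr (_ + _).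
  by rewrite -!mulrnA mulnC.
split.
  exists (primes m) => p pp ndiv.
  case: (boolP (p \in primes m)) => // nin; exfalso; apply: ndiv => a.
  have l0 : logn p m = 0%N.
    by apply/eqP; rewrite -leqn0 leqNgt logn_gt0.
  have [b Eb] := key p pp a.
  by exists b; move: Eb; rewrite l0 !expn0 !mulr1n.
move=> p pp; exists (logn p m) => a; exact: key.
Qed.

Section AD.
Variable A : zmodType.

Lemma prime_div_all (D : A -> Prop) :
  (forall q, prime q -> forall x, D x -> exists y, D y /\ x = y *+ q) ->
  forall n, (0 < n)%N -> forall x, D x -> exists y, D y /\ x = y *+ n.
Proof.
move=> Hq n; elim: n {-2}n (leqnn n) => [|N IH] n nN n0 x Dx.
  by move: nN n0; rewrite leqn0 => /eqP ->.
case: (ltnP 1 n) => n1; last first.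
  have -> : n = 1%N by apply/eqP; rewrite eqn_leq n1 n0.
  by exists x; rewrite mulr1n.
have pq := pdiv_prime n1.
have [y [Dy ->]] := Hq _ pq x Dx.
have k0 : (0 < n %/ pdiv n)%N by rewrite divn_gt0 ?prime_gt0 // dvdn_leq // pdiv_dvd.
have kN : (n %/ pdiv n <= N)%N.
  rewrite -ltnS; apply: leq_trans nN; rewrite ltn_Pdiv // prime_gt1 //.
have [z [Dz ->]] := IH _ kN k0 y Dy.
by exists z; split => //; rewrite -mulrnA divnK // pdiv_dvd.
Qed.

Lemma pn_pow (p N : nat) : pn_part_p_divisible A p N ->
  forall m : nat, (p ^ N %| m)%N -> forall a : A, exists b, a *+ m = b *+ m *+ p.
Proof.
move=> H m /dvdnP [k ->] a.
have [b Eb] := H a.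
exists b; rewrite [in LHS]mulnC mulrnA Eb -!mulrnA.
have -> : (p ^ N * (p * k))%N = (k * p ^ N * p)%N by rewrite mulnCA mulnC (mulnC (p ^ N)%N).
by [].
Qed.


Local Open Scope classical_set_scope.

Lemma ad_dpb : almost_divisible A -> divisible_plus_bounded A.
Proof.
move=> [[s Hs] Hfin].
have [np Hnp] : {np : nat -> nat & forall p, prime p -> pn_part_p_divisible A p (np p)}.
  apply: (@choice _ _ (fun p n => prime p -> pn_part_p_divisible A p n)) => p; case: (boolP (prime p)) => pp.
    by have [n Hn] := Hfin p pp; exists n.
  by exists 0%N.
set s' := undup [seq q <- s | prime q].
set m := (\prod_(q <- s') q ^ np q)%N.
have m0 : (0 < m)%N.
  rewrite /m big_seq; apply: (big_ind (fun n => 0 < n)%N) => // [x y|q].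
    by rewrite muln_gt0 => -> ->.
  rewrite /s' mem_undup mem_filter => /andP [pq _].
  by rewrite expn_gt0 prime_gt0.
pose D := fun x : A => exists a, x = a *+ m.
have sD : subgroup D.
  split; first by exists 0; rewrite mul0rn.
  by move=> _ _ [a ->] [b ->]; exists (a - b); rewrite mulrnBl.
have Dq : forall q, prime q -> forall x, D x -> exists y, D y /\ x = y *+ q.
  move=> q pq x [a ->].
  case: (boolP (q \in s')) => qs.
    have dv : (q ^ np q %| m)%N.
      by rewrite /m (bigD1_seq q qs (undup_uniq _)) dvdn_mulr.
    have [b Eb] := pn_pow (Hnp q pq) dv a.
    by exists (b *+ m); split => //; exists b.
  case: (pselect (p_divisible A q)) => [pdq|nd]; last first.
    exfalso; move/negP: qs; apply.
    by rewrite /s' mem_undup mem_filter pq (Hs q pq nd).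
  have [b ->] := pdq a.
  exists (b *+ m); split; first by exists b.
  by rewrite -!mulrnA mulnC.
have divD := prime_div_all Dq.
pose P := fun B : set A => (forall x y, B x -> B y -> B (x - y)) /\
  (forall x, D x -> B x -> x = 0).
have [B0 [[cB dB] maxB]] : exists B0, P B0 /\ forall B, B0 `<` B -> ~ P B.
  apply: Zorn_bigcup => F FP tot; split.
    move=> x y [X FX Xx] [Y FY Yy].
    case: (tot X Y FX FY) => [XY|YX].
      by exists Y => //; apply: (FP Y FY).1 => //; apply: XY.
    by exists X => //; apply: (FP X FX).1 => //; apply: YX.
  by move=> x Dx [X FX Xx]; apply: (FP X FX).2.
have B00 : B0 0.
  case: (pselect (B0 0)) => // nB; exfalso.
  apply: (maxB [set 0]).
    split.
      by move=> x Bx; exfalso; apply: nB; rewrite -(subrr x); apply: cB.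
    by move=> sub; apply: nB; apply: sub.
  by split; [move=> x y -> ->; rewrite subr0 | move=> x _ ->].
have sB : subgroup B0 by [].
have decA : forall a, exists d b, D d /\ B0 b /\ a = d + b.
  move=> a; case: (pselect (exists d b, D d /\ B0 b /\ a = d + b)) => // nda.
  exfalso.
  pose Pk := fun k => `[< (0 < k)%N /\
     exists d b, D d /\ B0 b /\ a *+ k = d + b >].
  have exk : exists k, Pk k.
    exists m; apply/asboolP; split => //; exists (a *+ m), 0; split.
      by exists a.
    by split => //; rewrite addr0.
  case: (ex_minnP exk) => k /asboolP [k0 [d [b [Dd [Bb Ek]]]]] kmin.
  have k1 : (1 < k)%N.
    case: (ltnP 1 k) => // k1; exfalso; apply: nda.
    have ek : k = 1%N by apply/eqP; rewrite eqn_leq k1 k0.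
    by exists d, b; move: Ek; rewrite ek mulr1n.
  have pq := pdiv_prime k1; set q := pdiv k in pq.
  set k' := (k %/ q)%N.
  have k'0 : (0 < k')%N by rewrite divn_gt0 ?prime_gt0 // dvdn_leq // pdiv_dvd.
  have k'k : (k' < k)%N by rewrite ltn_Pdiv // prime_gt1.
  set a' := a *+ k'.
  have Ea' : a' *+ q = d + b by rewrite -mulrnA divnK ?pdiv_dvd.
  have [d' [Dd' Ed]] := divD q (prime_gt0 pq) d Dd.
  set a'' := a' - d'.
  have Ea'' : a'' *+ q = b by rewrite mulrnBl Ea' Ed addrAC subrr add0r.
  have nd'' : ~ exists d2 b2, D d2 /\ B0 b2 /\ a'' = d2 + b2.
    move=> [d2 [b2 [Dd2 [Bb2 E2]]]].
    have : Pk k'.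
      apply/asboolP; split => //; exists (d2 + d'), b2; split.
        exact: subg_add.
      split => //; rewrite -/a' (_ : a' = a'' + d'); last by rewrite subrK.
      by rewrite E2 addrAC.
    by move/kmin; rewrite leqNgt k'k.
  pose B' := fun y => exists b0 j, B0 b0 /\ y = b0 + a'' *~ j.
  apply: (maxB B').
    split.
      by move=> y By; exists y, 0; rewrite mulr0z addr0.
    move=> sub; apply: nd''; have Ba : B0 a''.
      by apply: sub; exists 0, 1; rewrite mulr1z add0r.
    by exists 0, a''; rewrite add0r; split => //; case: sD.
  split.
    move=> _ _ [b1 [j1 [B1 ->]]] [b2 [j2 [B2 ->]]].
    exists (b1 - b2), (j1 - j2); split; first exact: cB.
    by rewrite mulrzBr opprD addrACA.
  move=> x Dx [b1 [j [Bb1 Ex]]].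
  case: (boolP (q %| j)%Z) => qj.
    have [j1 Ej] := dvdzP qj.
    apply: dB Dx _; rewrite Ex Ej mulrC mulrzA -pmulrn Ea''.
    by apply: (subg_add sB) => //; apply: subg_mulz.
  exfalso; apply: nd''.
  have [u [v Euv]] := Bezoutz j q.
  have g1 : gcdz j q = 1.
    have : coprime q `|j| by rewrite prime_coprime.
    by rewrite /coprime /gcdz => /eqP; rewrite gcdnC absz_nat => ->.
  have Ej : a'' *~ j = x - b1 by rewrite Ex [b1 + _]addrC addrK.
  exists (x *~ u), (b *~ v - b1 *~ u); split; first exact: subg_mulz.
  split; first by apply: cB; apply: subg_mulz.
  rewrite -[a'' in LHS]mulr1z -g1 -Euv mulrzDr (mulrC u) (mulrC v) !mulrzA.
  rewrite Ej -pmulrn Ea'' mulrzBl.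
  by rewrite addrAC addrA.
exists D, B0; split => //; split => //; split.
  by move=> d n Dd n0; apply: divD.
split.
  exists m; split => // b Bb; apply: dB; first by exists b.
  exact: subg_muln.
by split.
Qed.

End AD.

Section Act.
Variable A : zmodType.

Definition act k n (M : 'M[int]_(k, n)) (X : 'I_n -> A) : 'I_k -> A :=
  fun i => \sum_(t < n) X t *~ M i t.

Lemma act_mul k n p (M : 'M[int]_(k, n)) (N : 'M[int]_(n, p)) X :
  act (M *m N) X = act M (act N X).
Proof.
apply: funext => i; rewrite /act.
under eq_bigr => t _ do rewrite mxE mulrz_sumr.
rewrite exchange_big /=; apply: eq_bigr => s _.
rewrite mulrz_suml; apply: eq_bigr => t _.
by rewrite -mulrzA mulrC.
Qed.

Lemma act1 n (X : 'I_n -> A) : act 1%:M X = X.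
Proof.
apply: funext => i; rewrite /act (bigD1 i) //= big1 ?addr0.
  by rewrite mxE eqxx mulr1z.
by move=> t ti; rewrite mxE eq_sym (negbTE ti) mulr0z.
Qed.

Lemma crit_mx k n (M : 'M[int]_(k, n)) (a : 'I_k -> A) :
  (forall (u : 'I_k -> int) (d : nat),
     (forall t, (d%:Z %| \sum_i u i * M i t)%Z) ->
     exists z, \sum_i a i *~ u i = z *+ d) ->
  exists X, forall i, act M X i = a i.
Proof.
move=> H.
have [L Lu [R Ru [dl _ EM]]] := int_Smith_normal_form M.
set Dl := \matrix_(i, j) _ in EM.
pose dd (i : 'I_k) : int := if (i < n)%N then dl`_i else 0.
have EDl : forall i s, Dl i s = dd i * (i == s :> nat)%:R.
  move=> i s; rewrite /Dl mxE /dd.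
  case: eqP => [eis|_]; last by rewrite mulr0n mulr0.
  by rewrite eis ltn_ord mulr1n mulr1.
pose b := act (invmx L) a.
have Hz : forall i, exists z, b i = z *+ (absz (dd i)).
  move=> i; have [|z Ez] := H (fun l => invmx L i l) (absz (dd i)); last first.
    by exists z; rewrite -Ez /b /act; apply: eq_bigr => l _.
  move=> t.
  have -> : \sum_i0 invmx L i i0 * M i0 t = (invmx L *m M) i t by rewrite mxE.
  rewrite EM !mulmxA mulVmx // mul1mx mxE.
  have -> : \sum_j Dl i j * R j t = dd i * \sum_(j < n) (i == j :> nat)%:R * R j t.
    rewrite mulr_sumr; apply: eq_bigr => j _; by rewrite EDl mulrA.
  by apply: dvdz_mulr; rewrite unfold_in /dvdz /= dvdnn.
have [z Ez] := choice Hz.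
pose Y (t : 'I_n) := \sum_(i < k | val i == val t) z i *~ sgz (dd i).
have EY : act Dl Y = b.
  apply: funext => i; rewrite /act Ez.
  case: (ltnP i n) => [iln|nli].
    rewrite (bigD1 (Ordinal iln)) //= big1 ?addr0; last first.
      move=> t tne; rewrite EDl.
      suff -> : (i == t :> nat) = false by rewrite mulr0 mulr0z.
      by apply/negP => /eqP it; move/negP: tne; apply; apply/eqP/val_inj.
    rewrite EDl eqxx mulr1 /Y (big_pred1 i) /=; last by move=> i'.
    by rewrite -mulrzA -abszEsg pmulrn.
  have -> : dd i = 0 by rewrite /dd ltnNge nli.
  rewrite mulr0n big1 // => t _; rewrite EDl /dd ltnNge nli.
  by rewrite mul0r mulr0z.
exists (act (invmx R) Y) => i.
rewrite EM !act_mul -(act_mul R) mulmxV // act1 EY /b -act_mul mulmxV //.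
by rewrite act1.
Qed.

End Act.

Section Sys.
Variables (A : zmodType) (J : Type).
Local Notation JT := {classic J}.

Definition ev (r : seq (J * int)) (x : J -> A) := \sum_(c <- r) x c.1 *~ c.2.
Definition coef (r : seq (J * int)) (v : JT) : int :=
  \sum_(c <- r | (c.1 : JT) == v) c.2.

Lemma coef_cons c r v :
  coef (c :: r) v = (if (c.1 : JT) == v then c.2 else 0) + coef r v.
Proof. by rewrite /coef big_cons; case: ifP; rewrite ?add0r. Qed.

Lemma evM (vs : seq JT) (r : seq (J * int)) (x : J -> A) :
  uniq vs -> all (fun c => (c.1 : JT) \in vs) r ->
  ev r x = \sum_(t < size vs) x (tnth (in_tuple vs) t) *~ coef r (tnth (in_tuple vs) t).
Proof.
move=> uvs; elim: r => [|c r IH] /=.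
  by move=> _; rewrite /ev big_nil big1 // => t _; rewrite /coef big_nil mulr0z.
move=> /andP [cin rin]; rewrite /ev big_cons -/(ev r x) IH //.
under eq_bigr => t _ do rewrite coef_cons mulrzDr.
rewrite big_split /=; congr (_ + _).
have ci : (index (c.1 : JT) vs < size vs)%N by rewrite index_mem.
rewrite (bigD1 (Ordinal ci)) //= big1 ?addr0.
  have -> : tnth (in_tuple vs) (Ordinal ci) = (c.1 : JT).
    by rewrite (tnth_nth (c.1 : JT)) /= nth_index.
  by rewrite eqxx.
move=> t tne; case: eqP => [E|_]; last by rewrite mulr0z.
exfalso; move/negP: tne; apply; apply/eqP.
apply: (elimT (tuple_uniqP (in_tuple vs)) uvs).
by rewrite -E (tnth_nth (c.1 : JT)) /= nth_index.
Qed.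


Definition e0 : seq (J * int) * A := ([::], 0).

Lemma crit_J (G : seq (seq (J * int) * A)) :
  (forall (u : 'I_(size G) -> int) (d : nat),
     (forall x : J -> A, exists z,
        \sum_(i < size G) ev (nth e0 G i).1 x *~ u i = z *+ d) ->
     exists z, \sum_(i < size G) (nth e0 G i).2 *~ u i = z *+ d) ->
  exists x, forall i : 'I_(size G), ev (nth e0 G i).1 x = (nth e0 G i).2.
Proof.
move=> H.
pose vs : seq JT := undup (flatten [seq [seq (c.1 : JT) | c <- q.1] | q <- G]).
have uvs : uniq vs := undup_uniq _.
have allv : forall i : 'I_(size G),
    all (fun c => (c.1 : JT) \in vs) (nth e0 G i).1.
  move=> i; rewrite -(@all_map _ _ (fun c => (c.1 : JT)) (fun v => v \in vs)).
  apply/allP => v vin; rewrite mem_undup; apply/flattenP.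
  exists (nth [::] [seq [seq (c.1 : JT) | c <- q.1] | q <- G] i) => //.
    by apply: mem_nth; rewrite size_map.
  by rewrite (nth_map e0).
pose M : 'M[int]_(size G, size vs) :=
  \matrix_(i, t) coef (nth e0 G i).1 (tnth (in_tuple vs) t).
pose a (i : 'I_(size G)) := (nth e0 G i).2.
have [|X HX] := @crit_mx A _ _ M a; last first.
  pose x (j : J) := match insub (index (j : JT) vs) : option 'I_(size vs) with
    | Some t => X t | None => 0 end.
  have xX : forall t, x (tnth (in_tuple vs) t) = X t.
    move=> t; rewrite /x.
    have -> : index (tnth (in_tuple vs) t) vs = t.
      by rewrite (tnth_nth (tnth (in_tuple vs) t)) index_uniq.
    case: insubP => [t' _ Et'|]; last by rewrite ltn_ord.
    by congr X; apply: val_inj.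
  exists x => i; rewrite (evM x uvs (allv i)) -[RHS]/(a i) -HX /act.
  by apply: eq_bigr => t _; rewrite xX mxE.
  move=> u d Hd; apply: H => x.
  have Hw : forall t, exists wt : int, \sum_i u i * M i t = wt * d.
    by move=> t; have [q Eq] := dvdzP (Hd t); exists q.
  have [w Ew] := choice Hw.
  exists (\sum_t x (tnth (in_tuple vs) t) *~ w t).
  under eq_bigr => i _ do rewrite (evM x uvs (allv i)) mulrz_suml.
  rewrite exchange_big -sumrMnl; apply: eq_bigr => t _ /=.
  under eq_bigr => i _ do rewrite -mulrzA.
  rewrite -mulrz_sumr.
  have -> : \sum_(i < size G) coef (nth e0 G i).1 (tnth (in_tuple vs) t) * u i = w t * d.
    rewrite -Ew; apply: eq_bigr => i _; by rewrite mxE mulrC.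
  by rewrite mulrzA pmulrn.
Qed.

End Sys.

Definition divA (A : zmodType) (d : nat) (y : A) := exists z, y = z *+ d.

Lemma divA_add (A : zmodType) d (x y : A) : divA d x -> divA d y -> divA d (x + y).
Proof. by move=> [z ->] [w ->]; exists (z + w); rewrite mulrnDl. Qed.

Lemma divA_opp (A : zmodType) d (x : A) : divA d x -> divA d (- x).
Proof. by move=> [z ->]; exists (- z); rewrite mulNrn. Qed.

Lemma In_map_all (S T : Type) (f : S -> T) (P : T -> Prop) (s : seq S) :
  (forall x, P (f x)) -> forall c, List.In c (map f s) -> P c.
Proof. move=> H c; elim: s => //= x s IH [<-|]; [exact: H | exact: IH]. Qed.

Lemma In_map_mem (S : eqType) (T : Type) (f : S -> T) (s : seq S) x :
  x \in s -> List.In (f x) (map f s).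
Proof.
elim: s => //= y s IH; rewrite inE => /orP [/eqP ->|xs]; [by left|by right; apply: IH].
Qed.

Section Cond.
Variables (A : zmodType) (D B : A -> Prop) (m : nat).
Hypotheses (sD : subgroup D) (sB : subgroup B)
  (divD : forall d n, D d -> (0 < n)%N -> exists e, D e /\ d = e *+ n)
  (m1 : (1 <= m)%N) (bB : forall b, B b -> b *+ m = 0)
  (disj : forall x, D x -> B x -> x = 0)
  (dec : forall a, exists d b, D d /\ B b /\ a = d + b).

Lemma uniq_dec d1 b1 d2 b2 : D d1 -> B b1 -> D d2 -> B b2 ->
  d1 + b1 = d2 + b2 -> d1 = d2 /\ b1 = b2.
Proof.
move=> D1 B1 D2 B2 E.
have h : d1 - d2 = b2 - b1.
  by rewrite -(addrK b1 d1) E addrAC [d2 + _]addrC addrK.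
have z : d1 - d2 = 0.
  apply: disj; first by case: sD => _; apply.
  by rewrite h; case: sB => _; apply.
split; first by apply/eqP; rewrite -subr_eq0 z.
by apply/eqP; rewrite eq_sym -subr_eq0 -h z.
Qed.

Let dec' a : exists p : A * A, D p.1 /\ B p.2 /\ a = p.1 + p.2.
Proof. by have [d [b H]] := dec a; exists (d, b). Qed.

Definition pD a := (proj1_sig (cid (dec' a))).1.
Definition pB a := (proj1_sig (cid (dec' a))).2.

Lemma pP a : D (pD a) /\ B (pB a) /\ a = pD a + pB a.
Proof. exact: (proj2_sig (cid (dec' a))). Qed.

Lemma p_eq a d b : D d -> B b -> a = d + b -> pD a = d /\ pB a = b.
Proof.
move=> Dd Bb E; have [Da [Ba Ea]] := pP a.
by apply: uniq_dec => //; rewrite -Ea.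
Qed.

Lemma pB_eq a d b : D d -> B b -> a = d + b -> pB a = b.
Proof. by move=> Dd Bb E; have [] := p_eq Dd Bb E. Qed.

Lemma pD_eq a d b : D d -> B b -> a = d + b -> pD a = d.
Proof. by move=> Dd Bb E; have [] := p_eq Dd Bb E. Qed.

Lemma pB_add x y : pB (x + y) = pB x + pB y.
Proof.
have [Dx [Bx Ex]] := pP x; have [Dy [By Ey]] := pP y.
apply: (pB_eq (d := pD x + pD y)); [exact: subg_add|exact: subg_add|].
by rewrite {1}Ex {1}Ey addrACA.
Qed.

Lemma p_mulz x k : pD (x *~ k) = pD x *~ k /\ pB (x *~ k) = pB x *~ k.
Proof.
have [Dx [Bx Ex]] := pP x.
have E : x *~ k = pD x *~ k + pB x *~ k by rewrite {1}Ex mulrzDl.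
split; [apply: (pD_eq (b := pB x *~ k))|apply: (pB_eq (d := pD x *~ k))];
  by [exact: subg_mulz|].
Qed.

Lemma pB_muln x n : pB (x *+ n) = pB x *+ n.
Proof. by rewrite !pmulrn (p_mulz x n).2. Qed.

Lemma pB_B y : B y -> pB y = y.
Proof. by move=> By; apply: (pB_eq (d := 0)) => //; [case: sD|rewrite add0r]. Qed.

Lemma pD_0 : pD 0 = 0.
Proof. by apply: (pD_eq (d := 0) (b := 0)); [case: sD|case: sB|rewrite addr0]. Qed.

Lemma divA_pB d (y : A) : divA d y -> divA d (pB y).
Proof. by move=> [z ->]; exists (pB z); rewrite pB_muln. Qed.

Lemma divA_B d (y : A) : divA d y -> divA (gcdn d m) y.
Proof.
move=> [z ->]; exists (z *+ (d %/ gcdn d m)).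
by rewrite -mulrnA divnK // dvdn_gcdl.
Qed.

Lemma divA_Bg d (y : A) : B y -> divA (gcdn d m) y -> divA d y.
Proof.
move=> By [z Ez].
have [u [v Euv]] := Bezoutz d m.
have Ey : y = pB z *+ gcdn d m by rewrite -pB_muln -Ez pB_B.
exists (pB z *~ u).
rewrite Ey pmulrn.
have -> : (gcdn d m)%:Z = gcdz d m by [].
rewrite -Euv mulrzDr (mulrC u) (mulrC v) !mulrzA -!pmulrn.
have Bz := (pP z).2.1.
by rewrite (bB Bz) mul0rz addr0 !pmulrn -!mulrzA mulrC.
Qed.

Lemma B_modk (y : A) k k' : B y -> (k %% m)%Z = (k' %% m)%Z -> y *~ k = y *~ k'.
Proof.
move=> By Ek.
have H (q : int) : y *~ (q * m%:Z) = 0 by rewrite mulrC mulrzA -pmulrn (bB By) mul0rz.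
by rewrite [in LHS](divz_eq k m) [in RHS](divz_eq k' m) Ek !mulrzDr !H.
Qed.


Variable C : int -> A -> nat -> Prop.
Hypothesis C1 : forall L : seq (int * A * nat),
  (forall c, List.In c L -> C c.1.1 c.1.2 c.2) ->
  exists y : A, forall c, List.In c L -> divA c.2 (y *~ c.1.1 + c.1.2).
Hypothesis C2 : forall k e k0 e0 (q : int),
  C k e 0 -> C k0 e0 0 -> C (k - q * k0) (e - e0 *~ q) 0.
Hypothesis C0 : C 0 0 0.

Lemma C0e e : C 0 e 0 -> e = 0.
Proof.
move=> Ce; have [|y Hy] := C1 (L := [:: ((0 : int), e, 0%N)]).
  by move=> c [<-|].
by have [z] := Hy _ (or_introl erefl); rewrite /= mulr0z add0r mulr0n.
Qed.

Lemma condD : exists cD, D cD /\ forall k e, C k e 0 -> cD *~ k + pD e = 0.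
Proof.
case: (pselect (exists k e, C k e 0 /\ k != 0)) => [ex|nex]; last first.
  exists 0; split; first by case: sD.
  move=> k e Cke; case: (eqVneq k 0) => [k0|kn]; last first.
    by exfalso; apply: nex; exists k, e.
  by move: Cke; rewrite k0 => /C0e ->; rewrite mulr0z add0r pD_0.
pose Pn n := `[< exists k e, C k e 0 /\ k != 0 /\ absz k = n >].
have exn : exists n, Pn n.
  by have [k [e [Ce kn]]] := ex; exists (absz k); apply/asboolP; exists k, e.
case: (ex_minnP exn) => n /asboolP [k0 [e0 [Ck0 [k0n Hn]]]] nmin.
have n0 : (0 < absz k0)%N by rewrite absz_gt0.
have [w [Dw Ew]] := divD (pP e0).1 n0.
exists (- (w *~ sgz k0)); split.
  by apply: subg_opp => //; apply: subg_mulz.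
move=> k e Cke.
set q := (k %/ k0)%Z.
have Cr := C2 q Cke Ck0.
have Er : k - q * k0 = (k %% k0)%Z by rewrite {1}(divz_eq k k0) addrAC subrr add0r.
have r0 : (k %% k0)%Z = 0.
  case: (eqVneq (k %% k0)%Z 0) => // rn; exfalso.
  have : (n <= absz (k %% k0)%Z)%N.
    by apply: nmin; apply/asboolP; exists (k %% k0)%Z, (e - e0 *~ q); rewrite -Er.
  rewrite -Hn leqNgt -ltz_nat !abszE ger0_norm ?modz_ge0 //.
  by rewrite ltz_mod.
have Ee : e = e0 *~ q.
  by apply/eqP; rewrite -subr_eq0; apply/eqP; apply: C0e; rewrite -r0 -Er.
have Ek : k = q * k0 by rewrite {1}(divz_eq k k0) r0 addr0.
rewrite Ek Ee (p_mulz e0 q).1 Ew pmulrn abszEsg.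
rewrite mulNrz -!mulrzA.
have -> : sgz k0 * (q * k0) = sgz k0 * k0 * q by rewrite [q * k0]mulrC mulrA.
by rewrite addNr.
Qed.

Lemma divA_proj d (y : A) k e : divA d (y *~ k + e) ->
  divA (gcdn d m) (pB y *~ k + pB e).
Proof.
move=> H; apply: divA_B; have := divA_pB H.
by rewrite pB_add (p_mulz y k).2.
Qed.

Lemma condB : exists cB, B cB /\ forall k e d, C k e d -> divA d (cB *~ k + pB e).
Proof.
pose ty (k : int) (d : nat) := ((k %% m)%Z, gcdn d m).
pose T := [seq ((a%:Z), g) | a <- iota 0 m, g <- iota 0 m.+1].
have hrep : forall tau : int * nat, exists r : int * A * nat,
   C r.1.1 r.1.2 r.2 /\ ((exists k e d, C k e d /\ ty k d = tau) -> ty r.1.1 r.2 = tau).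
  move=> tau.
  case: (pselect (exists k e d, C k e d /\ ty k d = tau)) => [[k [e [d [Cc Et]]]]|nex].
    by exists (k, e, d); split.
  by exists (0, 0, 0%N); split => // ex; exfalso; apply: nex.
have [rep Hrep] := choice hrep.
have [|y0 Hy0] := C1 (L := [seq rep tau | tau <- T]).
  by apply: In_map_all => tau; case: (Hrep tau).
have By0 : B (pB y0) by case: (pP y0) => _ [].
exists (pB y0); split => // k e d Cc.
have m0 : (m%:Z != 0) by rewrite eqz_nat -lt0n.
have tin : ty k d \in T.
  rewrite /ty /T.
  have -> : (k %% m)%Z = (absz (k %% m)%Z)%:Z by rewrite gez0_abs // modz_ge0.
  apply: allpairs_f; rewrite mem_iota /= add0n.
    by rewrite -ltz_nat gez0_abs ?modz_ge0 //; have := ltz_mod k m0.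
  by rewrite ltnS dvdn_leq // dvdn_gcdr.
case: (Hrep (ty k d)) => Cr Tr.
have Tr' := Tr (ex_intro _ k (ex_intro _ e (ex_intro _ d (conj Cc erefl)))).
have H0 := Hy0 _ (In_map_mem rep tin).
move: (rep (ty k d)) Cr Tr' H0 => [[k' e'] d'] /= Cr Tr' H0.
case: Tr' => Ekm Egd.
have [|y1 Hy1] := C1 (L := [:: (k, e, d); (k', e', d')]).
  by move=> c [<-|[<-|]].
have H1 := Hy1 _ (or_introl erefl).
have H2 := Hy1 _ (or_intror (or_introl erefl)).
simpl in H1, H2.
have By1 : B (pB y1) by case: (pP y1) => _ [].
have Be : B (pB e) by case: (pP e) => _ [].
have Bsum : B (pB y0 *~ k + pB e).
  by apply: (subg_add sB) => //; apply: subg_mulz.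
apply: (divA_Bg Bsum).
have E1 : pB y0 *~ k = pB y0 *~ k' := B_modk By0 (esym Ekm).
have E2 : pB y1 *~ k = pB y1 *~ k' := B_modk By1 (esym Ekm).
have -> : pB y0 *~ k + pB e = (pB y0 *~ k' + pB e') - (pB y1 *~ k' + pB e')
    + (pB y1 *~ k + pB e).
  by rewrite E1 E2 [pB y1 *~ k' + pB e']addrC addrKA addrA subrK.
apply: divA_add; last exact: divA_proj.
apply: divA_add; first by rewrite -Egd; apply: divA_proj.
by apply: divA_opp; rewrite -Egd; apply: divA_proj.
Qed.

Lemma cond_sol : exists c, forall k e d, C k e d -> divA d (c *~ k + e).
Proof.
have [cD [DcD HD]] := condD; have [cB [BcB HB]] := condB.
exists (cD + cB) => k e d Cc.
have [De [Be Ee]] := pP e.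
have -> : (cD + cB) *~ k + e = (cD *~ k + pD e) + (cB *~ k + pB e).
  by rewrite {1}Ee mulrzDl addrACA.
have HBc := HB _ _ _ Cc.
case: (posnP d) => [d0|dpos].
  move: Cc HBc; rewrite d0 => Cc [z ->]; rewrite HD // mulr0n add0r.
  by exists 0; rewrite !mulr0n.
apply: divA_add => //.
have DX : D (cD *~ k + pD e) by apply: (subg_add sD) => //; apply: subg_mulz.
by have [z [_ ->]] := divD DX dpos; exists z.
Qed.

End Cond.

Lemma In_cat (T : Type) (q : T) s1 s2 :
  List.In q (s1 ++ s2) <-> List.In q s1 \/ List.In q s2.
Proof.
elim: s1 => [|x s1 IH] /=; first by split; [right|case].
rewrite IH; tauto.
Qed.

Lemma In_nth (T : Type) (x0 : T) s i : (i < size s)%N -> List.In (nth x0 s i) s.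
Proof. by elim: s i => //= x s IH [|i] /=; [left | move=> /IH; right]. Qed.

Lemma nth_of_In (T : Type) (x0 : T) s q : List.In q s ->
  exists i, (i < size s)%N /\ nth x0 s i = q.
Proof.
elim: s => //= x s IH [<-|/IH [i [Hi E]]]; first by exists 0%N.
by exists i.+1.
Qed.

Section Sys2.
Variables (A : zmodType) (J : Type).
Local Notation Eqn := (seq (J * int) * A)%type.

Definition holds (q : Eqn) (x : J -> A) := ev q.1 x = q.2.
Definition fsolv (S : set Eqn) := forall L : seq Eqn,
  (forall q, List.In q L -> S q) -> exists x, forall q, List.In q L -> holds q x.
Definition eqc (j : J) (c : A) : Eqn := ([:: (j, 1)], c).

Lemma ev_eqc j c (x : J -> A) : ev (eqc j c).1 x = x j.
Proof. by rewrite /ev big_cons big_nil addr0 mulr1z. Qed.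

Variables (D B : A -> Prop) (m : nat).
Hypotheses (sD : subgroup D) (sB : subgroup B)
  (divD : forall d n, D d -> (0 < n)%N -> exists e, D e /\ d = e *+ n)
  (m1 : (1 <= m)%N) (bB : forall b, B b -> b *+ m = 0)
  (disj : forall x, D x -> B x -> x = 0)
  (dec : forall a, exists d b, D d /\ B b /\ a = d + b).

Lemma crux (T : set Eqn) j : fsolv T -> exists c, fsolv (T `|` [set eqc j c]).
Proof.
move=> fT.
pose C k e d := exists F : seq Eqn, (forall q, List.In q F -> T q) /\
  forall x, (forall q, List.In q F -> holds q x) -> divA d (x j *~ k + e).
have C1 : forall L : seq (int * A * nat),
    (forall c, List.In c L -> C c.1.1 c.1.2 c.2) ->
    exists y : A, forall c, List.In c L -> divA c.2 (y *~ c.1.1 + c.1.2).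
  move=> L HL.
  have [F [FT HF]] : exists F : seq Eqn, (forall q, List.In q F -> T q) /\
      forall x, (forall q, List.In q F -> holds q x) ->
      forall c, List.In c L -> divA c.2 (x j *~ c.1.1 + c.1.2).
    elim: L HL => [|c L IH] HL; first by exists [::].
    have [|F [FT HF]] := IH; first by move=> c' Hc'; apply: HL; right.
    have [F1 [F1T HF1]] := HL c (or_introl erefl).
    exists (F1 ++ F); split.
      by move=> q /In_cat [] ?; [apply: F1T|apply: FT].
    move=> x Hx c' [<-|Hc'].
      by apply: HF1 => q Hq; apply: Hx; apply/In_cat; left.
    by apply: HF => // q Hq; apply: Hx; apply/In_cat; right.
  have [x Hx] := fT F FT.
  by exists (x j); apply: HF.
have C2 : forall k e k0 e0 (q : int),
    C k e 0 -> C k0 e0 0 -> C (k - q * k0) (e - e0 *~ q) 0.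
  move=> k e k0 e0 q [F1 [F1T H1]] [F2 [F2T H2]].
  exists (F1 ++ F2); split.
    by move=> q' /In_cat [] ?; [apply: F1T|apply: F2T].
  move=> x Hx.
  have [z1 E1] := H1 x (fun q' Hq => Hx q' (proj2 (In_cat _ _ _) (or_introl Hq))).
  have [z2 E2] := H2 x (fun q' Hq => Hx q' (proj2 (In_cat _ _ _) (or_intror Hq))).
  exists 0; rewrite mulr0n.
  have -> : x j *~ (k - q * k0) + (e - e0 *~ q) =
      (x j *~ k + e) - (x j *~ k0 + e0) *~ q.
    rewrite mulrzBr mulrzDl [q * k0]mulrC mulrzA opprD addrACA.
    by [].
  by rewrite E1 E2 !mulr0n mul0rz subrr.
have C0 : C 0 0 0 by exists [::]; split => // x _; exists 0; rewrite mulr0z addr0.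
have [c Hc] := cond_sol sD sB divD m1 bB disj dec C1 C2 C0.
exists c => L HL.
have [L' [L'T HL']] : exists L' : seq Eqn, (forall q, List.In q L' -> T q) /\
    forall x, (forall q, List.In q L' -> holds q x) -> holds (eqc j c) x ->
      forall q, List.In q L -> holds q x.
  elim: L HL => [|q L IH] HL; first by exists [::].
  have [|L' [L'T HL']] := IH; first by move=> q' Hq'; apply: HL; right.
  case: (pselect (T q)) => Tq.
    exists (q :: L'); split; first by move=> q' [<-|]; [|apply: L'T].
    move=> x Hx Hc' q' [<-|Hq']; first by apply: Hx; left.
    by apply: HL' => // q'' Hq''; apply: Hx; right.
  have Eq : q = eqc j c.
    by case: (HL q (or_introl erefl)).
  exists L'; split => // x Hx Hc' q' [<-|Hq']; first by rewrite Eq.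
  exact: HL'.
pose G := eqc j c :: L'.
have [|x Hx] := crit_J (G := G).
  move=> u d Hd.
  have CC : C (u ord0) (\sum_(i < size L') (nth (e0 _ _) L' i).2 *~ u (lift ord0 i)) d.
    exists L'; split => // x Hsol.
    have [z Ez] := Hd x; exists z; rewrite -Ez big_ord_recl ev_eqc.
    congr (_ + _); apply: eq_bigr => i _.
    have Ei : nth (e0 A J) G (lift ord0 i) = nth (e0 A J) L' i by [].
    by rewrite Ei Hsol //; apply: In_nth.
  have [z Ez] := Hc _ _ _ CC.
  by exists z; rewrite big_ord_recl.
exists x; apply: HL'.
  move=> q Hq; have [i [Hi Ei]] := nth_of_In (e0 _ _) Hq.
  by have := Hx (Ordinal (Hi : (i.+1 < size G)%N)); rewrite /= Ei.
by have := Hx (@Ordinal (size G) 0 erefl).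
Qed.

End Sys2.

Local Open Scope classical_set_scope.

Lemma ev_ext (A : zmodType) (J : Type) (r : seq (J * int)) (x y : J -> A) :
  (forall c, List.In c r -> x c.1 = y c.1) -> ev r x = ev r y.
Proof.
elim: r => [|c r IH] H; first by rewrite /ev !big_nil.
rewrite /ev !big_cons -/(ev r x) -/(ev r y) IH; last by move=> c' Hc'; apply: H; right.
by rewrite H //; left.
Qed.

Lemma dpb_ac (A : zmodType) : divisible_plus_bounded A -> algebraically_compact A.
Proof.
move=> [D [B [sD [sB [divD [[m [m1 bB]] [disj dec]]]]]]] I J rows rhs Hfs.
pose S0 : set (seq (J * int) * A) := fun q => exists i, q = (rows i, rhs i).
have fS0 : fsolv S0.
  move=> L HL.
  have [F HF] : exists F : seq I, forall q, List.In q L ->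
      exists i, List.In i F /\ q = (rows i, rhs i).
    elim: L HL => [|q L IH] HL; first by exists [::].
    have [|F HF] := IH; first by move=> q' Hq'; apply: HL; right.
    have [i Ei] := HL q (or_introl erefl).
    exists (i :: F) => q' [<-|Hq']; first by exists i; split => //; left.
    by have [i' [Hi' Ei']] := HF q' Hq'; exists i'; split => //; right.
  have [x Hx] := Hfs F; exists x => q Hq.
  by have [i [Hi ->]] := HF q Hq; apply: Hx.
pose P := fun X : set (seq (J * int) * A) => fsolv (X `|` S0).
have [S [PS maxS]] : exists S, P S /\ forall X, S `<` X -> ~ P X.
  apply: Zorn_bigcup => F FP tot L HL.
  have : (forall q, List.In q L -> S0 q) \/
      exists X, F X /\ forall q, List.In q L -> (X `|` S0) q.
    elim: L HL => [|q L IH] HL; first by left.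
    have [|H1|[X [FX HX]]] := IH; first by move=> q' Hq'; apply: HL; right.
      case: (HL q (or_introl erefl)) => [[X FX Xq]|S0q].
        right; exists X; split => // q' [<-|Hq']; first by left.
        by right; apply: H1.
      by left => q' [<-|Hq'] //; apply: H1.
    case: (HL q (or_introl erefl)) => [[Y FY Yq]|S0q].
      case: (tot X Y FX FY) => [XY|YX].
        right; exists Y; split => // q' [<-|Hq']; first by left.
        by case: (HX q' Hq') => [Xq'|S0q']; [left; apply: XY|right].
      right; exists X; split => // q' [<-|Hq']; first by left; apply: YX.
      exact: HX.
    right; exists X; split => // q' [<-|Hq']; first by right.
    exact: HX.
  case=> [H0|[X [FX HX]]]; first exact: fS0.
  have [x Hx] := FP X FX L HX.
  by exists x.
pose Tm := S `|` S0.
have maxT : forall q, fsolv (Tm `|` [set q]) -> Tm q.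
  move=> q Hq; case: (pselect (S q)) => Sq; first by left.
  exfalso; apply: (maxS (S `|` [set q])).
    split; first by move=> y Sy; left.
    by move=> sub; apply: Sq; apply: sub; right.
  move=> L HL; apply: Hq => q' Hq'.
  by case: (HL q' Hq') => [[Sq'|->]|S0q']; [left; left|right|left; right].
have Hc : forall j, exists c, Tm (eqc j c).
  move=> j; have [c Hc] := crux sD sB divD m1 bB disj dec j PS.
  by exists c; apply: maxT.
have [cf Hcf] := choice Hc.
exists cf => i.
pose L := (rows i, rhs i) :: [seq eqc c.1 (cf c.1) | c <- rows i].
have [|x Hx] := PS L.
  move=> q [<-|Hq]; first by right; exists i.
  by apply: (In_map_all (P := Tm)) Hq => c; apply: Hcf.
have Hxi : holds (rows i, rhs i) x by apply: Hx; left.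
rewrite /holds /= in Hxi; change (ev (rows i) cf = rhs i); rewrite -Hxi.
apply: ev_ext => c Hc'; symmetry.
have := Hx (eqc c.1 (cf c.1)) _.
  rewrite /holds ev_eqc; apply.
right; elim: (rows i) Hc' => //= c' r IH [<-|Hr]; first by left.
by right; apply: IH.
Qed.

Theorem mainTheorem4 (A : zmodType) :
  (almost_divisible A <-> divisible_plus_bounded A) /\
  (almost_divisible A -> algebraically_compact A).
Proof.
split; first by split; [exact: ad_dpb | exact: dpb_ad].
by move=> H; apply: dpb_ac; apply: ad_dpb.
Qed.
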